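(* Let $H$ be a real Hilbert space, $A$ a strictly positive selfadjoint operator on $H$ with $\lambda_1>0$ the minimum of its spectrum, $\alpha,\beta,\gamma>0$ with $\mu=\gamma-\alpha\beta\ge0$, $\eta\in\mathbb R$, $\rho>0$, and assume $$\eta^2>\frac{\mu}{\alpha\lambda_1}\qquad\text{and}\qquad\rho>\frac{2\mu\lambda_1}{\alpha\eta^2\lambda_1-\mu}.$$ For $(u,v,w,\theta)\in\mathcal H=H^1\times H^1\times H\times H$ and $\varepsilon>0$ define $$\mathsf L=\frac{\gamma}{\alpha}\|v+\alpha u\|_1^2+\|w+\alpha v\|^2-\frac{\mu}{\alpha}\|v\|_1^2+\|\theta\|^2+\rho\Big(\eta\langle\theta,v\rangle+\frac{\eta^2}{2}\|v\|_1^2+\frac12\|\theta\|_{-1}^2\Big)-\varepsilon^2\langle v-\alpha u,w+\alpha v\rangle,$$ $$\mathcal E=\frac12\big[\|v+\alpha u\|_1^2+\|w+\alpha v\|^2+\|v\|_1^2+\|\theta\|^2\big].$$ Then there exists $c>1$ such that $\frac1c\mathcal E\le\mathsf L\le c\,\mathcal E$ on $\mathcal H$ for every $\varepsilon>0$ small enough.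
   Context: $H^\sigma=\mathcal D(A^{\sigma/2})$ with $\|u\|_\sigma=\|A^{\sigma/2}u\|$ (for $\sigma<0$, the completion); $\langle\cdot,\cdot\rangle,\|\cdot\|$ are the inner product and norm of $H$. *)

(* Defs.v *)
From HB Require Import structures.
From mathcomp Require Import all_boot all_order all_algebra.
From mathcomp Require Import boolp classical_sets reals.
Set Implicit Arguments. Unset Strict Implicit. Unset Printing Implicit Defensive.
Import Order.TTheory GRing.Theory Num.Theory.
Local Open Scope ring_scope.
Local Open Scope classical_set_scope.

Section Hilbert.
Variables (R : realType) (V : lmodType R) (ip : V -> V -> R).

Definition hnorm (x : V) : R := Num.sqrt (ip x x).

Definition is_real_hilbert : Prop :=
  [/\ (forall x y, ip x y = ip y x),
      (forall (a : R) x y z, ip (a *: x + y) z = a * ip x z + ip y z),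
      (forall x, 0 <= ip x x),
      (forall x, ip x x = 0 -> x = 0) &
      (forall u : nat -> V,
         (forall e : R, 0 < e -> exists N, forall m n, (N <= m)%N -> (N <= n)%N ->
             hnorm (u m - u n) < e) ->
         exists l, forall e : R, 0 < e -> exists N, forall n, (N <= n)%N ->
             hnorm (u n - l) < e)].

(* (possibly unbounded) operators: a domain D and a map T defined on it *)
Definition subspace (D : set V) : Prop :=
  D 0 /\ forall (a : R) x y, D x -> D y -> D (a *: x + y).

Definition linear_on (D : set V) (T : V -> V) : Prop :=
  forall (a : R) x y, D x -> D y -> T (a *: x + y) = a *: T x + T y.

Definition dense (D : set V) : Prop :=
  forall x (e : R), 0 < e -> exists y, D y /\ hnorm (x - y) < e.

(* T = T^* : densely defined linear, and (v, z) is in the graph of the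
   adjoint iff it is in the graph of T *)
Definition selfadjoint (D : set V) (T : V -> V) : Prop :=
  [/\ subspace D, linear_on D T, dense D &
      forall v z, (forall u, D u -> ip (T u) v = ip u z) <-> (D v /\ T v = z)].

Definition strictly_positive (D : set V) (T : V -> V) : Prop :=
  forall u, D u -> u <> 0 -> 0 < ip (T u) u.

Definition resolvent (D : set V) (T : V -> V) (l : R) : Prop :=
  (forall f, exists x, D x /\ T x - l *: x = f) /\
  (forall x y, D x -> D y -> T x - l *: x = T y - l *: y -> x = y) /\
  exists C : R, forall x, D x -> hnorm x <= C * hnorm (T x - l *: x).

(* (real) spectrum; for a selfadjoint T the whole spectrum is real *)
Definition spectrum (D : set V) (T : V -> V) : set R :=
  [set l | ~ resolvent D T l].

Definition spectrum_min (D : set V) (T : V -> V) (l1 : R) : Prop :=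
  spectrum D T l1 /\ forall l, spectrum D T l -> l1 <= l.

Definition is_sqrt_op (D : set V) (A : V -> V) (DB : set V) (B : V -> V) : Prop :=
  [/\ selfadjoint DB B,
      (forall u, DB u -> 0 <= ip (B u) u),
      (forall x, D x <-> (DB x /\ DB (B x))) &
      (forall x, D x -> A x = B (B x))].

(* ||x||_1 = ||A^{1/2} x|| for x in H^1 = D(A^{1/2}) *)
Definition norm1 (B : V -> V) (x : V) : R := hnorm (B x).

(* ||th||_{-1} = ||A^{-1/2} th||, A^{-1/2} th being the x in D(A^{1/2}) with
   A^{1/2} x = th *)
Definition normm1 (DB : set V) (B : V -> V) (th : V) : R :=
  hnorm (xget 0 [set x | DB x /\ B x = th]).

Definition Lfun (B : V -> V) (DB : set V) (alpha gamma mu eta rho eps : R)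
  (u v w th : V) : R :=
  gamma / alpha * norm1 B (v + alpha *: u) ^+ 2 + hnorm (w + alpha *: v) ^+ 2
  - mu / alpha * norm1 B v ^+ 2 + hnorm th ^+ 2
  + rho * (eta * ip th v + eta ^+ 2 / 2 * norm1 B v ^+ 2
           + 1 / 2 * normm1 DB B th ^+ 2)
  - eps ^+ 2 * ip (v - alpha *: u) (w + alpha *: v).

Definition Efun (B : V -> V) (alpha : R) (u v w th : V) : R :=
  1 / 2 * (norm1 B (v + alpha *: u) ^+ 2 + hnorm (w + alpha *: v) ^+ 2
           + norm1 B v ^+ 2 + hnorm th ^+ 2).
End Hilbert.

(* Main.v *)
Require Import Defs.
From HB Require Import structures.
From mathcomp Require Import all_boot all_order all_algebra.
From mathcomp Require Import boolp classical_sets reals.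
From mathcomp Require Import lra ring.
Import Order.TTheory GRing.Theory Num.Theory.
Local Open Scope ring_scope.
Local Open Scope classical_set_scope.
Set Implicit Arguments. Unset Strict Implicit.
Lemma quad_cs (R : realType) (P Q S : R) :
  (forall t, 0 <= P + 2 * t * Q + t ^+ 2 * S) -> 0 <= S -> Q ^+ 2 <= P * S.
Proof.
move=> H S0.
have [Sp|] := ltP 0 S.
  have := H (- Q / S) => h.
  have h2 : 0 <= S * (P + 2 * (- Q / S) * Q + (- Q / S) ^+ 2 * S) by apply: mulr_ge0.
  have e : S * (P + 2 * (- Q / S) * Q + (- Q / S) ^+ 2 * S) = P * S - Q ^+ 2.
    by field; rewrite gt_eqF.
  lra.
move=> Sle; have S00 : S = 0 by apply/eqP; rewrite eq_le Sle S0.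
rewrite S00 mulr0.
have [Q0|Qn] := eqVneq Q 0; first by rewrite Q0 expr0n.
have := H (- (P + 1) / (2 * Q)); rewrite S00 mulr0 addr0.
have -> : 2 * (- (P + 1) / (2 * Q)) * Q = - (P + 1) by field; rewrite Qn.
lra.
Qed.

Section Ip.
Variables (R : realType) (V : lmodType R) (ip : V -> V -> R).
Hypothesis ipC : forall x y, ip x y = ip y x.
Hypothesis ipL : forall (a : R) x y z, ip (a *: x + y) z = a * ip x z + ip y z.
Hypothesis ipP : forall x, 0 <= ip x x.

Lemma ip0l z : ip 0 z = 0.
Proof. have := ipL 1 0 0 z; rewrite scale1r addr0 mul1r; lra. Qed.
Lemma ipDl x y z : ip (x + y) z = ip x z + ip y z.
Proof. by have := ipL 1 x y z; rewrite scale1r mul1r. Qed.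
Lemma ipZl a x z : ip (a *: x) z = a * ip x z.
Proof. by have := ipL a x 0 z; rewrite addr0 ip0l addr0. Qed.
Lemma ipNl x z : ip (- x) z = - ip x z.
Proof. by rewrite -scaleN1r ipZl mulN1r. Qed.
Lemma ip0r z : ip z 0 = 0.
Proof. by rewrite ipC ip0l. Qed.
Lemma ipDr x y z : ip z (x + y) = ip z x + ip z y.
Proof. by rewrite ipC ipDl !(ipC _ z). Qed.
Lemma ipZr a x z : ip z (a *: x) = a * ip z x.
Proof. by rewrite ipC ipZl ipC. Qed.
Lemma ipNr x z : ip z (- x) = - ip z x.
Proof. by rewrite ipC ipNl ipC. Qed.

Lemma nexp k p y : ip (k *: p + y) (k *: p + y) =
  k ^+ 2 * ip p p + 2 * k * ip p y + ip y y.
Proof. rewrite !(ipDl, ipDr, ipZl, ipZr) (ipC y p); ring. Qed.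

Lemma ip_cs x y : ip x y ^+ 2 <= ip y y * ip x x.
Proof.
apply: quad_cs => // t. by have := ipP (t *: x + y); rewrite nexp; lra.
Qed.

Lemma ip_abs x y : 2 * ip x y <= ip x x + ip y y /\ - (ip x x + ip y y) <= 2 * ip x y.
Proof.
have := ipP ((-1) *: x + y); have := ipP (1 *: x + y); rewrite !nexp; split; nra.
Qed.

Lemma ip_par x y : ip (x + y) (x + y) <= 2 * ip x x + 2 * ip y y.
Proof.
have := ipP ((-1) *: x + y); have := nexp 1 x y; rewrite scale1r !nexp; nra.
Qed.
End Ip.
Lemma sigma_ex (R : realType) (l1 al mu eta rho : R) :
  0 < l1 -> 0 < al -> 0 <= mu -> 0 < rho ->
  eta ^+ 2 > mu / (al * l1) ->
  rho > 2 * mu * l1 / (al * eta ^+ 2 * l1 - mu) ->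
  exists sg : R, [/\ 0 <= sg, sg < 1, 2 * mu < al * rho * eta ^+ 2 * sg &
     rho * sg < 2 * (1 - sg) * l1].
Proof.
move=> l1p alp mup rhop Heta Hrho.
have al1p : 0 < al * l1 by apply: mulr_gt0.
have he : 0 <= mu / (al * l1) by apply: divr_ge0 => //; apply: ltW.
have e2p : 0 < eta ^+ 2 by apply: le_lt_trans Heta.
move: Heta; rewrite ltr_pdivrMr // => Heta.
have denp : 0 < al * eta ^+ 2 * l1 - mu by lra.
move: Hrho; rewrite ltr_pdivrMr // => Hrho.
pose W := rho + 2 * l1.
have eW : W = rho + 2 * l1 by [].
clearbody W.
have Wp : 0 < W by lra.
pose d := al * rho * eta ^+ 2.
have ed : d = al * rho * eta ^+ 2 by [].
clearbody d.
have dp : 0 < d by rewrite ed; apply: mulr_gt0 => //; apply: mulr_gt0.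
have key : mu * W < d * l1 by rewrite eW ed; lra.
exists (mu / d + l1 / W).
have e1 : d * (mu / d + l1 / W) = mu + d * l1 / W.
  by field; rewrite !gt_eqF.
have e2 : (mu / d + l1 / W) * W = mu * W / d + l1.
  by field; rewrite !gt_eqF.
have c1 : mu < d * l1 / W by rewrite ltr_pdivlMr //; lra.
have c2 : mu * W / d < l1 by rewrite ltr_pdivrMr //; lra.
have s0 : 0 <= mu / d + l1 / W.
  by apply: addr_ge0; apply: divr_ge0 => //; apply: ltW.
have c3 : (mu / d + l1 / W) * W < W by rewrite e2; lra.
split => //.
- nra.
- rewrite -ed e1; lra.
- have e3 : (mu / d + l1 / W) * W = (mu / d + l1 / W) * rho + 2 * (mu / d + l1 / W) * l1.
    by rewrite eW; ring.
  lra.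
Qed.

Lemma lower_form (R : realType) (l1 al mu eta rho : R) :
  0 < l1 -> 0 < al -> 0 <= mu -> 0 < rho ->
  eta ^+ 2 > mu / (al * l1) ->
  rho > 2 * mu * l1 / (al * eta ^+ 2 * l1 - mu) ->
  exists k : R, 0 < k /\ forall X2 Y2 Z2 c2 : R, 0 <= X2 -> 0 <= Y2 -> l1 * Y2 <= Z2 ->
   (forall t, 0 <= t ^+ 2 * eta ^+ 2 * X2 + 2 * t * eta * c2 + Y2) ->
   k * (X2 + Z2) <= - (mu / al * X2) + Z2 + rho * (eta * c2 + eta ^+ 2 / 2 * X2 + 1 / 2 * Y2).
Proof.
move=> l1p alp mup rhop Heta Hrho.
have [sg [sg0 sg1 c1 c2]] := @sigma_ex _ _ _ _ _ _ l1p alp mup rhop Heta Hrho.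
have sp : 0 < 1 - sg by lra.
pose k0 := rho * sg / (2 * (1 - sg)).
have k0e : k0 = rho / (2 * (1 - sg)) - rho / 2 by rewrite /k0; field; rewrite gt_eqF.
have k0p : 0 <= k0 by rewrite /k0; apply: divr_ge0; [apply: mulr_ge0 => //; apply: ltW|lra].
have k0l : k0 < l1 by rewrite /k0 ltr_pdivrMr; lra.
clearbody k0.
pose m1 := rho * sg * eta ^+ 2 / 2 - mu / al.
have m1p : 0 < m1.
  rewrite /m1 subr_gt0 ltr_pdivrMr //; lra.
pose m2 := 1 - k0 / l1.
have m2p : 0 < m2 by rewrite /m2 subr_gt0 ltr_pdivrMr // mul1r.
exists (Num.min m1 m2); split; first by rewrite lt_min m1p m2p.
move=> X2 Y2 Z2 c2' X0 Y0 YZ Ht.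
have F1 : 0 <= (rho / (2 * (1 - sg))) * ((1 - sg) ^+ 2 * eta ^+ 2 * X2 + 2 * (1 - sg) * eta * c2' + Y2).
  by apply: mulr_ge0 => //; apply: divr_ge0; lra.
have F1e : (rho / (2 * (1 - sg))) * ((1 - sg) ^+ 2 * eta ^+ 2 * X2 + 2 * (1 - sg) * eta * c2' + Y2)
   = rho * (1 - sg) * eta ^+ 2 / 2 * X2 + rho * eta * c2' + rho / (2 * (1 - sg)) * Y2.
  by field; rewrite gt_eqF.
have F2 : k0 * Y2 <= k0 / l1 * Z2.
  have -> : k0 * Y2 = k0 / l1 * (l1 * Y2) by field; rewrite gt_eqF.
  by apply: ler_wpM2l => //; apply: divr_ge0 => //; apply: ltW.
have F3 : k0 * Y2 = rho / (2 * (1 - sg)) * Y2 - rho / 2 * Y2 by rewrite k0e; ring.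
have G1 : Num.min m1 m2 * X2 <= m1 * X2 by apply: ler_wpM2r => //; rewrite ge_min lexx.
have Z0 : 0 <= Z2 by apply: le_trans YZ; apply: mulr_ge0 => //; apply: ltW.
have G2 : Num.min m1 m2 * Z2 <= m2 * Z2 by apply: ler_wpM2r => //; rewrite ge_min lexx orbT.
rewrite /m1 /m2 in G1 G2.
lra.
Qed.
Lemma opfacts (R : realType) (V : lmodType R) (ip : V -> V -> R)
  (D : set V) (A : V -> V) (DB : set V) (B : V -> V) (l1 : R) :
  is_real_hilbert ip -> selfadjoint ip D A -> strictly_positive ip D A ->
  spectrum_min ip D A l1 -> 0 < l1 -> is_sqrt_op ip D A DB B ->
  (forall x y, DB x -> DB y -> ip (B x) y = ip x (B y)) /\
  (forall z, exists y, DB y /\ B y = z) /\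
  (forall y, DB y -> l1 * ip y y <= ip (B y) (B y)).
Proof.
move=> [ipC ipL ipP ipD _] [[D0 Dsub] Alin _ Aadj] Apos [_ Hmin] l1p
  [[[DB0 DBsub] Blin _ Badj] _ DAB AB].
have Asym x y : D x -> D y -> ip (A x) y = ip x (A y).
  by move=> Dx Dy; apply: ((Aadj y (A y)).2 (conj Dy erefl)).
have Bsym x y : DB x -> DB y -> ip (B x) y = ip x (B y).
  by move=> Dx Dy; apply: ((Badj y (B y)).2 (conj Dy erefl)).
have res l : l < l1 -> resolvent ip D A l.
  move=> hl; apply: contrapT => nr; have := Hmin l nr; by rewrite leNgt hl.
pose Pt t := forall x, D x -> t * ip x x <= ip (A x) x.
have Pt0 : Pt 0.
  move=> x Dx; rewrite mul0r; have [->|nx] := eqVneq x 0.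
    by rewrite (ip0r ipC ipL).
  by apply: ltW; apply: Apos => //; apply/eqP.
pose E := [set t | t <= l1 /\ Pt t].
have hasE : has_sup E.
  split; first by exists 0; split; [apply: ltW|].
  by exists l1 => t [].
pose s := sup E.
have sE : forall t, E t -> t <= s by move=> t; apply: sup_upper_bound.
have Pts : Pt s.
  move=> x Dx; apply/ler_addgt0Pr => e ep.
  have nx0 := ipP x.
  pose e' := e / (ip x x + 1).
  have e'p : 0 < e' by apply: divr_gt0 => //; lra.
  have [t [tl Ptt] hst] := sup_adherent e'p hasE.
  have h1 := Ptt x Dx.
  have h2 : (s - e') * ip x x <= t * ip x x by apply: ler_wpM2r => //; apply: ltW.
  have h3 : e' * ip x x <= e.
    rewrite /e' mulrAC ler_pdivrMr; last lra.
    by apply: ler_wpM2l; [apply: ltW|lra].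
  lra.
clearbody s.
have ls : l1 <= s.
  rewrite leNgt; apply/negP => hs.
  have [Hsurj [_ [C HC]]] := res s hs.
  pose M := Num.max C 0.
  have M0 : 0 <= M by rewrite le_max lexx orbT.
  have HM x : D x -> ip x x <= M ^+ 2 * ip (A x - s *: x) (A x - s *: x).
    move=> Dx; have := HC x Dx; rewrite /hnorm => h.
    have h' : Num.sqrt (ip x x) <= M * Num.sqrt (ip (A x - s *: x) (A x - s *: x)).
      apply: le_trans h _; apply: ler_wpM2r; first exact: sqrtr_ge0.
      by rewrite le_max lexx.
    rewrite -(sqr_sqrtr (ipP x)) -(sqr_sqrtr (ipP (A x - s *: x))).
    have := sqrtr_ge0 (ip x x); have := sqrtr_ge0 (ip (A x - s *: x) (A x - s *: x)).
    nra.
  have Fe x y : ip (A x - s *: x) y = ip (A x) y - s * ip x y.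
    by rewrite (ipDl ipL) (ipNl ipL) (ipZl ipL).
  have Key x : D x -> ip x x <= (M + 1) * (ip (A x) x - s * ip x x).
    move=> Dx; have [x2 [Dx2 Sx2]] := Hsurj x.
    have Fxx : 0 <= ip (A x) x - s * ip x x by have := Pts x Dx; lra.
    have Fx2 : ip (A x2) x2 - s * ip x2 x2 = ip x x2 by rewrite -Fe Sx2.
    have g0 : 0 <= ip x x2 by rewrite -Fx2; have := Pts x2 Dx2; lra.
    have Fxx2 : ip (A x) x2 - s * ip x x2 = ip x x.
      rewrite Asym // -Sx2 (ipDr ipC ipL) (ipNr ipC ipL) (ipZr ipC ipL) Sx2.
      by [].
    have CSF : (ip (A x) x2 - s * ip x x2) ^+ 2 <=
               (ip (A x) x - s * ip x x) * (ip (A x2) x2 - s * ip x2 x2).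
      apply: quad_cs; last by rewrite Fx2.
      move=> t; have Dv := Dsub t x2 x Dx2 Dx.
      have := Pts _ Dv; rewrite Alin //.
      rewrite !((ipDl ipL), (ipDr ipC ipL), (ipZl ipL), (ipZr ipC ipL)).
      rewrite (ipC x2 x) (Asym x2 x) // (ipC x2 (A x)).
      nra.
    rewrite Fxx2 Fx2 in CSF.
    have cs := ip_cs ipC ipL ipP x x2.
    have hm := HM x2 Dx2; rewrite Sx2 in hm.
    have nx0 := ipP x; have nx20 := ipP x2.
    have gM : ip x x2 <= M * ip x x.
      have : ip x x2 ^+ 2 <= (M * ip x x) ^+ 2.
        apply: le_trans cs _; rewrite exprMn.
        have := ler_wpM2r nx0 hm; lra.
      have := mulr_ge0 M0 nx0; nra.
    have [nxz|nxp] := eqVneq (ip x x) 0.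
      by rewrite nxz in Fxx *; apply: mulr_ge0 => //; lra.
    have nxp' : 0 < ip x x by rewrite lt_def nxp nx0.
    have : ip x x * ip x x <= (M * (ip (A x) x - s * ip x x)) * ip x x.
      have := ler_wpM2l Fxx gM; rewrite -expr2; lra.
    rewrite ler_pM2r // => h.
    have := mulr_ge0 M0 Fxx; lra.
  pose dl := Num.min (1 / (M + 1)) (l1 - s).
  have dlp : 0 < dl.
    rewrite lt_min; apply/andP; split; [apply: divr_gt0; lra | by rewrite subr_gt0].
  have Edl : E (s + dl).
    split.
      have : dl <= l1 - s by rewrite /dl ge_min lexx orbT.
      lra.
    move=> x Dx.
    have h1 : dl * ip x x <= 1 / (M + 1) * ip x x.
      by apply: ler_wpM2r; [exact: ipP | rewrite ge_min lexx].
    have h2 : 1 / (M + 1) * ip x x <= ip (A x) x - s * ip x x.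
      by rewrite mul1r ler_pdivrMl; [apply: Key | lra].
    lra.
  have := sE _ Edl; lra.
have P x : D x -> l1 * ip x x <= ip (A x) x.
  by move=> Dx; apply: le_trans (Pts x Dx); apply: ler_wpM2r.
have F3 z : exists y, DB y /\ B y = z.
  have [Hs _] := res 0 l1p; have [x [Dx Ax]] := Hs z.
  exists (B x); have [_ DBBx] := (DAB x).1 Dx; split => //.
  by rewrite -AB // -Ax scale0r subr0.
split => //; split => // y DBy.
have [w [DBw Bw]] := F3 y.
have Dw : D w by apply/DAB; rewrite Bw.
have e1 : B y = A w by rewrite AB // Bw.
have e2 : ip y y = ip (A w) w by rewrite -Bw AB // Bsym // Bw.
rewrite e1 e2.
have h1 := P w Dw.
have cs := ip_cs ipC ipL ipP (A w) w.
have n0 := ipP (A w); have nw0 := ipP w.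
have p0 : 0 <= ip (A w) w by apply: le_trans h1; apply: mulr_ge0 => //; apply: ltW.
have [pz|pnz] := eqVneq (ip (A w) w) 0; first by rewrite pz mulr0.
have pp : 0 < ip (A w) w by rewrite lt_def pnz p0.
have : l1 * ip (A w) w * ip (A w) w <= ip (A w) (A w) * ip (A w) w.
  have := ler_wpM2l (ltW l1p) cs.
  have := ler_wpM2r n0 h1.
  rewrite expr2; nra.
by rewrite ler_pM2r.
Qed.
Unset Implicit Arguments. Set Strict Implicit.
Theorem lemma7p5 (R : realType) (V : lmodType R) (ip : V -> V -> R)
  (D : set V) (A : V -> V) (DB : set V) (B : V -> V)
  (lambda1 alpha beta gamma eta rho : R) :
  is_real_hilbert ip ->
  selfadjoint ip D A ->
  strictly_positive ip D A ->
  spectrum_min ip D A lambda1 ->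
  0 < lambda1 ->
  is_sqrt_op ip D A DB B ->
  0 < alpha -> 0 < beta -> 0 < gamma ->
  0 <= gamma - alpha * beta ->
  0 < rho ->
  eta ^+ 2 > (gamma - alpha * beta) / (alpha * lambda1) ->
  rho > 2 * (gamma - alpha * beta) * lambda1
          / (alpha * eta ^+ 2 * lambda1 - (gamma - alpha * beta)) ->
  exists c : R, 1 < c /\
    exists eps0 : R, 0 < eps0 /\
      forall eps : R, 0 < eps -> eps < eps0 ->
        forall u v w th : V, DB u -> DB v ->
          Efun ip B alpha u v w th / c
            <= Lfun ip B DB alpha gamma (gamma - alpha * beta) eta rho eps u v w th /\
          Lfun ip B DB alpha gamma (gamma - alpha * beta) eta rho eps u v w th
            <= c * Efun ip B alpha u v w th.
Proof.
move=> Hh HsaA Hpos Hspec l1p Hsq alp bp gp mup rhop Heta Hrho.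
have [Bsym [Bsurj F2]] := @opfacts _ _ _ _ _ _ _ _ Hh HsaA Hpos Hspec l1p Hsq.
case: Hh => ipC ipL ipP _ _.
case: Hsq => [[[_ DBsub] _ _ _] _ _ _].
move: mup Heta Hrho; set mu := gamma - alpha * beta => mup Heta Hrho.
have [k0 [k0p Hlow]] := @lower_form _ _ _ _ _ _ l1p alp mup rhop Heta Hrho.
pose kap := Num.min k0 (Num.min (gamma / alpha) 1).
have gap : 0 < gamma / alpha by apply: divr_gt0.
have kapp : 0 < kap by rewrite /kap !lt_min k0p gap ltr01.
have kk0 : kap <= k0 by rewrite /kap ge_min lexx.
have kga : kap <= gamma / alpha by rewrite /kap !ge_min lexx orbT.
have k1 : kap <= 1 by rewrite /kap !ge_min lexx !orbT.
clearbody kap.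
pose K2 := 8 / lambda1 + 1.
have l8 : 0 < 8 / lambda1 by apply: divr_gt0.
have K2p : 0 < K2 by rewrite /K2; lra.
pose K3 := gamma / alpha + 2 + rho * eta ^+ 2 + rho / lambda1 + kap.
have rl : 0 < rho / lambda1 by apply: divr_gt0.
have re : 0 <= rho * eta ^+ 2 by apply: mulr_ge0; [apply: ltW|apply: sqr_ge0].
have K3p : 0 < K3 by rewrite /K3; lra.
have ik : 0 < 1 / kap by apply: divr_gt0.
pose c := 2 * K3 + 1 / kap + 1.
have kc : 1 <= kap * c.
  have : kap * c = 2 * K3 * kap + 1 + kap by rewrite /c; field; rewrite gt_eqF.
  have := mulr_gt0 K3p kapp; lra.
exists c; split; first by rewrite /c; lra.
pose eps0 := Num.min 1 (kap / K2).
have kK : 0 < kap / K2 by apply: divr_gt0.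
exists eps0; split; first by rewrite /eps0 lt_min ltr01 kK.
move=> eps ep epl u v w th DBu DBv.
have e1 : eps < 1 by move: epl; rewrite /eps0 lt_min => /andP[].
have e2 : eps < kap / K2 by move: epl; rewrite /eps0 lt_min => /andP[].
have ee0 : 0 <= eps ^+ 2 by apply: sqr_ge0.
have eeK : eps ^+ 2 * K2 <= kap.
  have : eps ^+ 2 <= kap / K2.
    have h := ler_wpM2l (ltW ep) (ltW e1).
    rewrite expr2; lra.
  by rewrite ler_pdivlMr.
set y := xget 0 [set x | DB x /\ B x = th].
have [DBy Byth] : DB y /\ B y = th by exact: (xgetPex 0 (P:=[set x | DB x /\ B x = th]) (Bsurj th)).
have DBvu : DB (v + alpha *: u) by rewrite addrC; apply: DBsub.
have HZ : lambda1 * ip y y <= ip th th by rewrite -Byth; apply: F2.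
have HX : lambda1 * ip v v <= ip (B v) (B v) by apply: F2.
have HA : lambda1 * ip (v + alpha *: u) (v + alpha *: u) <=
          ip (B (v + alpha *: u)) (B (v + alpha *: u)) by apply: F2.
have ipthv : ip th v = ip y (B v) by rewrite -Byth Bsym.
have Ht t : 0 <= t ^+ 2 * eta ^+ 2 * ip (B v) (B v) + 2 * t * eta * ip y (B v) + ip y y.
  have := ipP ((t * eta) *: B v + y); rewrite (nexp ipC ipL) (ipC (B v) y) exprMn; lra.
have [cr1 cr2] := ip_abs ipC ipL ipP (v - alpha *: u) (w + alpha *: v).
have nd : ip (v - alpha *: u) (v - alpha *: u) <= 8 * ip v v + 2 * ip (v + alpha *: u) (v + alpha *: u).
  have -> : v - alpha *: u = v *+ 2 + - (v + alpha *: u) by rewrite mulr2n opprD addrA addrK.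
  apply: le_trans (ip_par ipC ipL ipP _ _) _.
  rewrite (ipNl ipL) (ipNr ipC ipL) opprK mulr2n !(ipDl ipL) !(ipDr ipC ipL); lra.
rewrite /Lfun /Efun /norm1 /normm1 -/y /hnorm !sqr_sqrtr ?ipP // ipthv.
have := Hlow _ _ _ _ (ipP _) (ipP _) HZ Ht.
move: HZ HX HA Ht cr1 cr2 nd.
have := ipP y; have := ipP v; have := ipP (v + alpha *: u); have := ipP th;
have := ipP (B v); have := ipP (B (v + alpha *: u)); have := ipP (w + alpha *: v).
have := ipP (v - alpha *: u).
generalize (ip (B (v + alpha *: u)) (B (v + alpha *: u))) => a.
generalize (ip (w + alpha *: v) (w + alpha *: v)) => b.
generalize (ip (B v) (B v)) => X2.
generalize (ip th th) => Z2.
generalize (ip y y) => Y2.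
generalize (ip y (B v)) => c2.
generalize (ip v v) => nv.
generalize (ip (v + alpha *: u) (v + alpha *: u)) => nvu.
generalize (ip (v - alpha *: u) (v - alpha *: u)) => ndd.
generalize (ip (v - alpha *: u) (w + alpha *: v)) => cr.
move=> nd0 b0 a0 X0 Z0 nvu0 nv0 Y0 HZ HX HA Ht cr1 cr2 nd Hl.
have S0 : 0 <= a + b + X2 + Z2 by lra.
have il : 0 <= lambda1^-1 by rewrite invr_ge0; apply: ltW.
have hnd1 : ndd <= (8 * X2 + 2 * a) / lambda1.
  rewrite ler_pdivlMr //.
  have := ler_wpM2l (ltW l1p) nd; lra.
have hnd2 : (8 * X2 + 2 * a) / lambda1 <= 8 / lambda1 * (a + b + X2 + Z2).
  rewrite mulrAC; apply: ler_wpM2r => //; lra.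
have eK : K2 * (a + b + X2 + Z2) = 8 / lambda1 * (a + b + X2 + Z2) + (a + b + X2 + Z2)
  by rewrite /K2; ring.
have hc1 : eps ^+ 2 * (2 * cr) <= eps ^+ 2 * (K2 * (a + b + X2 + Z2))
  by apply: ler_wpM2l => //; lra.
have hc2 : eps ^+ 2 * (- (K2 * (a + b + X2 + Z2))) <= eps ^+ 2 * (2 * cr)
  by apply: ler_wpM2l => //; lra.
have hc3 : eps ^+ 2 * (K2 * (a + b + X2 + Z2)) <= kap * (a + b + X2 + Z2).
  by rewrite mulrA; apply: ler_wpM2r.
have g1 : kap * a <= gamma / alpha * a by apply: ler_wpM2r.
have g2 : kap * b <= 1 * b by apply: ler_wpM2r.
have g3 : kap * (X2 + Z2) <= k0 * (X2 + Z2) by apply: ler_wpM2r => //; lra.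
have cp : 0 < c by rewrite /c; lra.
have ic : 1 / c <= kap by rewrite ler_pdivrMr.
have ic2 : (a + b + X2 + Z2) / 2 * (1 / c) <= (a + b + X2 + Z2) / 2 * kap.
  by apply: ler_wpM2l => //; lra.
have muX : 0 <= mu / alpha * X2 by apply: mulr_ge0 => //; apply: divr_ge0 => //; apply: ltW.
have eX : 0 <= eta ^+ 2 * X2 by apply: mulr_ge0 => //; apply: sqr_ge0.
have Htm := Ht (-1).
rewrite sqrrN expr1n mul1r in Htm.
have u1 : rho * (eta * c2 + eta ^+ 2 / 2 * X2 + 1 / 2 * Y2) <= rho * (eta ^+ 2 * X2 + Y2).
  by apply: ler_wpM2l; [apply: ltW | lra].
have YZ : Y2 <= Z2 / lambda1 by rewrite ler_pdivlMr // mulrC.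
have u2 : rho * Y2 <= rho * (Z2 / lambda1) by apply: ler_wpM2l => //; apply: ltW.
have v1 : gamma / alpha * a <= gamma / alpha * (a + b + X2 + Z2) by apply: ler_wpM2l; [apply: ltW|lra].
have v2 : rho * eta ^+ 2 * X2 <= rho * eta ^+ 2 * (a + b + X2 + Z2) by apply: ler_wpM2l => //; lra.
have v3 : rho / lambda1 * Z2 <= rho / lambda1 * (a + b + X2 + Z2) by apply: ler_wpM2l; [apply: ltW|lra].
have v4 : 0 <= kap * (a + b + X2 + Z2) by apply: mulr_ge0 => //; apply: ltW.
have v5 : 0 <= 1 / kap * (a + b + X2 + Z2) by apply: mulr_ge0 => //; apply: ltW.
have eK3 : K3 * (a + b + X2 + Z2) = gamma / alpha * (a + b + X2 + Z2) + 2 * (a + b + X2 + Z2)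
   + rho * eta ^+ 2 * (a + b + X2 + Z2) + rho / lambda1 * (a + b + X2 + Z2) + kap * (a + b + X2 + Z2)
  by rewrite /K3; ring.
have ec : c * (1 / 2 * (a + b + X2 + Z2)) = K3 * (a + b + X2 + Z2) + 1 / kap * (a + b + X2 + Z2) / 2 + (a + b + X2 + Z2) / 2
  by rewrite /c; field; rewrite gt_eqF.
clearbody K2 K3 c eps0 y mu.
split; lra.
Qed.
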